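(* For all Maya diagrams $\sigma,\sigma'$, \[ \langle\sigma',A^{-1}(x;t)\sigma\rangle=\sum_{h}\prod_{i\in\mathbb{Z}}\Omega(h_{i-1},\sigma_i,h_i,\sigma'_i), \] where the sum runs over all row configurations $h$ from $\sigma$ to $\sigma'$ and the vertex weights are $\omega_1=\omega_3=\omega_5=1$, $\omega_2=-tx$, $\omega_4=x$, $\omega_6=(1-t)x$.
   Context: Maya diagrams are maps $\sigma:\mathbb{Z}\to\{0,1\}$ with $\sigma_i=1$ for $i\ll0$ and $\sigma_i=0$ for $i\gg0$. $\mathcal{F}(t)$ is the $\mathbb{C}(t)$-space with basis the Maya diagrams, with the bilinear form $\langle\cdot,\cdot\rangle$ making them orthonormal. Operators: $\psi^+_i(t)\sigma=(\sigma+\epsilon_i)\prod_{j>i}(-t)^{\sigma_j}$ if $\sigma_i=0$, else $0$; $\psi^-_i(t)\sigma=(\sigma-\epsilon_i)\prod_{j>i}(-t)^{-\sigma_j}$ if $\sigma_i=1$, else $0$; $E_{ij}(t)=(1-t)\psi_i^-(t)\psi_j^+(t)$; $A(x;t)=1+\sum_{r>0}\sum_{i_1<j_1<\cdots<i_r<j_r}(xt)^{j_1-i_1+\cdots+j_r-i_r}E_{i_1j_1}(t)\cdots E_{i_rj_r}(t)$, and $A^{-1}(x;t)$ is its inverse as a formal power series in $x$ with coefficients in $\operatorname{End}\mathcal{F}(t)$. Six-vertex row configurations: the allowed vertices (W,N,E,S) and weights are $\Omega(0,0,0,0)=\omega_1$, $\Omega(1,1,1,1)=\omega_2$, $\Omega(0,1,0,1)=\omega_3$,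 $\Omega(1,0,1,0)=\omega_4$, $\Omega(1,0,0,1)=\omega_5$, $\Omega(0,1,1,0)=\omega_6$, all other tuples having weight $0$. A row configuration from $\sigma$ (top) to $\sigma'$ (bottom) is $h:\mathbb{Z}\to\{0,1\}$ with $h_i=0$ for $|i|$ large and $(h_{i-1},\sigma_i,h_i,\sigma'_i)$ allowed for every $i$. *)

(* Defs.v *)
From HB Require Import structures.
From mathcomp Require Import all_boot all_order all_algebra.
From mathcomp Require Import algC fraction.
From mathcomp Require Import boolp classical_sets fsbigop.

Set Implicit Arguments.
Unset Strict Implicit.
Unset Printing Implicit Defensive.

Import Order.TTheory GRing.Theory Num.Theory.
Local Open Scope ring_scope.
Local Open Scope classical_set_scope.

Definition Ct : fieldType := {fraction {poly algC}}.
Definition tC : Ct := FracField.tofrac ('X : {poly algC}).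

Definition state := int -> bool.

Definition maya : set state :=
  [set s : state | (exists N : int, forall i, (i <= N)%R -> s i)
         /\ (exists N : int, forall i, (N <= i)%R -> ~~ s i)].

Definition upd (s : state) (i : int) (b : bool) : state :=
  fun j => if j == i then b else s j.

Section Fock.
Variables (K : fieldType) (t : K).

(* An operator on F(t) is recorded by its matrix elements:                   *)
(*   op_ M s' s = < s' , M s >  for Maya diagrams s, s'.                    *)
Definition op := state -> state -> K.

Definition op1 : op := fun s' s => if s' == s then 1 else 0.

Definition opmul (M N : op) : op :=
  fun s' s => \sum_(tau \in maya) M s' tau * N tau s.

Definition opscale (c : K) (M : op) : op := fun s' s => c * M s' s.

Definition psi_plus (i : int) : op :=
  fun s' s =>
    if ~~ s i && (s' == upd s i true)
    then \big[*%R/1%R]_(j \in [set j : int | (i < j)%R]) ((- t) ^+ s j)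
    else 0.

Definition psi_minus (i : int) : op :=
  fun s' s =>
    if s i && (s' == upd s i false)
    then \big[*%R/1%R]_(j \in [set j : int | (i < j)%R]) ((- t) ^- s j)
    else 0.

Definition Eop (i j : int) : op := opscale (1 - t) (opmul (psi_minus i) (psi_plus j)).

Fixpoint interlaced (p : seq (int * int)) : bool :=
  match p with
  | [::] => true
  | (i, j) :: q =>
      (i < j)%R && (if q is (i', _) :: _ then (j < i')%R else true) && interlaced q
  end.

Definition pweight (p : seq (int * int)) : int := \sum_(ij <- p) (ij.2 - ij.1).

Definition Eprod (p : seq (int * int)) : op :=
  foldr (fun ij M => opmul (Eop ij.1 ij.2) M) op1 p.

(* Coefficient of x^n in A(x;t) = 1 + sum_{r>0} sum (xt)^{sum (j_k - i_k)} E ... E *)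
Definition Acoef (n : nat) : op :=
  fun s' s =>
    (if n == 0%N then op1 s' s else 0) +
    \sum_(p \in [set p : seq (int * int) |
               [/\ (0 < size p)%N, interlaced p & pweight p = n%:Z]])
      t ^+ n * Eprod p s' s.

(* Coefficients of the inverse power series A^{-1}(x;t):                     *)
Fixpoint Ainv_upto (n : nat) : seq op :=
  match n with
  | 0 => [:: op1]
  | m.+1 =>
      let L := Ainv_upto m in
      rcons L (fun s' s =>
        - \sum_(k < m.+1) opmul (Acoef k.+1) (nth op1 L (m - k)) s' s)
  end.

Definition Ainvcoef (n : nat) : op := nth op1 (Ainv_upto n) n.

End Fock.

Definition allowed (w n e s : bool) : bool :=
  match w, n, e, s with
  | false, false, false, false => true
  | true, true, true, true => true
  | false, true, false, true => true
  | true, false, true, false => true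
  | true, false, false, true => true
  | false, true, true, false => true
  | _, _, _, _ => false
  end.

Definition Omega (R : nzRingType) (w1 w2 w3 w4 w5 w6 : R) (w n e s : bool) : R :=
  match w, n, e, s with
  | false, false, false, false => w1
  | true, true, true, true => w2
  | false, true, false, true => w3
  | true, false, true, false => w4
  | true, false, false, true => w5
  | false, true, true, false => w6
  | _, _, _, _ => 0
  end.

Definition rowconf (s s' : state) : set state :=
  [set h : state | (exists N : int, forall i, (N <= `|i|)%R -> ~~ h i)
         /\ (forall i, allowed (h (i - 1)) (s i) (h i) (s' i))].

Definition rowsum (R : comNzRingType) (w1 w2 w3 w4 w5 w6 : R) (s s' : state) : R :=
  \sum_(h \in rowconf s s')
     \big[*%R/1%R]_(i \in [set: int]) Omega w1 w2 w3 w4 w5 w6 (h (i - 1)) (s i) (h i) (s' i).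

(* Main.v *)
Require Import Defs.
From HB Require Import structures.
From mathcomp Require Import all_boot all_order all_algebra.
From mathcomp Require Import algC fraction.
From mathcomp Require Import boolp classical_sets fsbigop.
From mathcomp Require Import zify ring lra.
Set Implicit Arguments.
Unset Strict Implicit.
Unset Printing Implicit Defensive.
Import Order.TTheory GRing.Theory Num.Theory.
Local Open Scope ring_scope.
Local Open Scope classical_set_scope.

Lemma fsbig_seqE (R : eqType) (idx : R) (op : Monoid.com_law idx)
  (T : choiceType) (P : set T) (F : T -> R) (r : seq T) :
  uniq r -> (forall x, P x -> F x <> idx -> x \in r) ->
  (forall x, x \in r -> ~ P x -> F x = idx) ->
  \big[op/idx]_(x \in P) F x = \big[op/idx]_(x <- r) F x.
Proof.
move=> ur h1 h2; rewrite fsbig_supp; apply: fsbig_fwiden => //.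
- by move=> x [Px Fx]; apply: h1.
- move=> x [/= xr nP]; rewrite /preimage /=.
  case: (pselect (P x)) => Px; last exact: h2.
  apply: contrapT => Fx; apply: nP; split => //.
Qed.

Fixpoint ir (a : int) (n : nat) : seq int :=
  if n is n'.+1 then a :: ir (a + 1) n' else [::].

Lemma mem_ir a n x : (x \in ir a n) = (a <= x) && (x < a + n%:Z).
Proof.
elim: n a => [|n IH] a /=; first by rewrite in_nil addr0; lia.
rewrite in_cons IH; lia.
Qed.

Lemma uniq_ir a n : uniq (ir a n).
Proof.
elim: n a => [|n IH] a //=; rewrite IH andbT mem_ir; lia.
Qed.

Lemma size_ir a n : size (ir a n) = n.
Proof. by elim: n a => [|n IH] a //=; rewrite IH. Qed.

Lemma ir_cat a m n : ir a (m + n) = ir a m ++ ir (a + m%:Z) n.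
Proof.
elim: m a => [|m IH] a /=; first by rewrite addr0.
rewrite IH; congr (_ :: _ ++ _); congr ir; lia.
Qed.


Definition ext (a : int) (l : seq bool) : state :=
  fun i => if i < a then true else nth false l `|i - a|%N.

Definition vac (a : int) (L : nat) (s : state) :=
  forall i, (i < a -> s i) /\ (a + L%:Z <= i -> ~~ s i).

Lemma noinf_left (h : state) (N c : int) :
  (forall i, N <= `|i| -> ~~ h i) -> (forall j, j <= c -> h j -> h (j - 1)) ->
  forall i, i <= c -> ~~ h i.
Proof.
move=> hN hs i ic; apply/negP => hi.
have H : forall n : nat, h (i - n%:Z).
  elim=> [|n IH]; first by rewrite subr0.
  have -> : i - n.+1%:Z = (i - n%:Z) - 1 by lia.
  by apply: hs => //; lia.
by apply/negP: (H (`|N| + `|i|)%N); apply: hN; lia.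
Qed.

Lemma noinf_right (h : state) (N c : int) :
  (forall i, N <= `|i| -> ~~ h i) -> (forall j, c <= j -> h j -> h (j + 1)) ->
  forall i, c <= i -> ~~ h i.
Proof.
move=> hN hs i ic; apply/negP => hi.
have H : forall n : nat, h (i + n%:Z).
  elim=> [|n IH]; first by rewrite addr0.
  have -> : i + n.+1%:Z = (i + n%:Z) + 1 by lia.
  by apply: hs => //; lia.
by apply/negP: (H (`|N| + `|i|)%N); apply: hN; lia.
Qed.

Section OmegaLemmas.
Variables (R : nzRingType) (w1 w2 w3 w4 w5 w6 : R).
Lemma Omega_dis w n e s : ~~ allowed w n e s -> Omega w1 w2 w3 w4 w5 w6 w n e s = 0.
Proof. by case: w; case: n; case: e; case: s. Qed.
Lemma Omega_neq0 w n e s : Omega w1 w2 w3 w4 w5 w6 w n e s != 0 -> allowed w n e s.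
Proof. by apply: contraR => /Omega_dis ->; rewrite eqxx. Qed.
End OmegaLemmas.

Lemma allowed_det w n e e' s : allowed w n e s -> allowed w n e' s -> e = e'.
Proof. by case: w; case: n; case: e; case: e'; case: s. Qed.

Fixpoint pathG (R : nzRingType) (W : bool -> bool -> bool -> bool -> R)
  (g : bool) (a : int) (L : nat) (s s' : state) : R :=
  if L is L'.+1 then
    W g (s a) false (s' a) * pathG W false (a + 1) L' s s' +
    W g (s a) true (s' a) * pathG W true (a + 1) L' s s'
  else (if g then 0 else 1).

Lemma eq_pathG (R : nzRingType) W g a L (s1 s1' s2 s2' : state) :
  (forall i, i \in ir a L -> s1 i = s2 i /\ s1' i = s2' i) ->
  @pathG R W g a L s1 s1' = pathG W g a L s2 s2'.
Proof.
elim: L g a => [|L IH] g a //= H.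
have [-> ->] := H a (mem_head _ _).
by rewrite !(IH _ (a + 1)) // => i hi; apply: H; rewrite in_cons hi orbT.
Qed.

Section RowSum.
Variables (R : comNzRingType) (w2 w4 w5 w6 : R).
Local Notation W := (Omega 1 w2 1 w4 w5 w6).

Lemma rowconf_Z a L s s' h : vac a L s -> vac a L s' -> rowconf s s' h ->
  forall i, (i < a \/ a + L%:Z - 1 <= i) -> ~~ h i.
Proof.
move=> vs vs' [[N hN] hal] i [ia|ia].
  apply: (noinf_left (c := a - 1) hN _ (i := i)) => [j jc hj|]; last by lia.
  have := hal j; rewrite hj (proj1 (vs j)) ?(proj1 (vs' j)); try lia.
  by case: (h (j - 1)).
apply: (noinf_right (c := a + L%:Z - 1) hN _ (i := i)) => [j jc hj|]; last by lia.
have := hal (j + 1); rewrite addrK hj.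
rewrite (negbTE (proj2 (vs (j+1)) _)) ?(negbTE (proj2 (vs' (j+1)) _)); try lia.
by case: (h (j + 1)).
Qed.

Lemma prod_window a L s s' (h : state) : vac a L s -> vac a L s' ->
  (forall i, (i < a \/ a + L%:Z - 1 <= i) -> ~~ h i) ->
  \big[*%R/1%R]_(i \in [set: int]) W (h (i - 1)) (s i) (h i) (s' i) =
  \prod_(i <- ir a L) W (h (i - 1)) (s i) (h i) (s' i).
Proof.
move=> vs vs' hZ; apply: fsbig_seqE; first exact: uniq_ir.
  move=> i _; apply: contra_notP => /negP; rewrite mem_ir negb_and -!ltNge.
  case/orP => hi.
    rewrite (negbTE (hZ i _)) ?(negbTE (hZ (i-1) _)) ?(proj1 (vs i)) ?(proj1 (vs' i)) //; lia.
  rewrite (negbTE (hZ i _)) ?(negbTE (hZ (i-1) _)); try lia.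
  by rewrite (negbTE (proj2 (vs i) _)) ?(negbTE (proj2 (vs' i) _)) //; lia.
by move=> x _ [].
Qed.

Lemma prod_path a L s s' (h : state) :
  (forall i, i \in ir a L -> allowed (h (i - 1)) (s i) (h i) (s' i)) ->
  h (a + L%:Z - 1) = false ->
  \prod_(i <- ir a L) W (h (i - 1)) (s i) (h i) (s' i) = pathG W (h (a - 1)) a L s s'.
Proof.
elim: L a => [|L IH] a /= hal hend.
  by rewrite big_nil; move: hend; rewrite addr0 => ->.
rewrite big_cons IH; first last.
- by move: hend; congr (h _ = _); lia.
- by move=> i hi; apply: hal; rewrite in_cons hi orbT.
have ha := hal a (mem_head _ _).
rewrite addrK.
case hha: (h a) ha => ha.
  by rewrite (@Omega_dis _ _ _ _ _ _ _ _ _ false) ?mul0r ?add0r // ;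
     apply/negP => hb; have := allowed_det ha hb.
by rewrite (@Omega_dis _ _ _ _ _ _ _ _ _ true) ?mul0r ?addr0 // ;
     apply/negP => hb; have := allowed_det ha hb.
Qed.

Lemma rowconf_uniq a L s s' h1 h2 : vac a L s -> vac a L s' ->
  rowconf s s' h1 -> rowconf s s' h2 -> h1 = h2.
Proof.
move=> vs vs' r1 r2.
have Z1 := rowconf_Z vs vs' r1; have Z2 := rowconf_Z vs vs' r2.
have H : forall k : nat, (k <= L)%N -> h1 (a + k%:Z - 1) = h2 (a + k%:Z - 1).
  elim=> [|k IH] kL.
    by rewrite (negbTE (Z1 _ _)) ?(negbTE (Z2 _ _)) //; left; lia.
  have e : a + k.+1%:Z - 1 = a + k%:Z by lia.
  rewrite e; apply: (@allowed_det (h1 (a + k%:Z - 1)) (s (a + k%:Z)) _ _ (s' (a + k%:Z))).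
    by have := r1.2 (a + k%:Z).
  by rewrite IH; [have := r2.2 (a + k%:Z)|lia].
apply/funext => i.
case: (boolP ((i < a) || (a + L%:Z - 1 <= i))) => hi.
  by rewrite (negbTE (Z1 _ _)) ?(negbTE (Z2 _ _)) //; case/orP: hi; auto.
have -> : i = a + (absz (i - a + 1))%:Z - 1 by lia.
by apply: H; lia.
Qed.

Lemma path_exists g a L s s' : pathG W g a L s s' != 0 ->
  exists h : state, [/\ h (a - 1) = g,
    (forall i, (i < a - 1 \/ a + L%:Z - 1 <= i) -> ~~ h i) &
    (forall i, i \in ir a L -> allowed (h (i - 1)) (s i) (h i) (s' i))].
Proof.
elim: L g a => [|L IH] g a /=.
  case: g => //; rewrite ?eqxx // => _; exists (fun _ => false); split => //.
have key : forall e, W g (s a) e (s' a) * pathG W e (a + 1) L s s' != 0 ->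
   exists h : state, [/\ h (a - 1) = g,
    (forall i, (i < a - 1 \/ a + L.+1%:Z - 1 <= i) -> ~~ h i) &
    (forall i, i \in ir a L.+1 -> allowed (h (i - 1)) (s i) (h i) (s' i))].
  move=> e hne.
  have hW : W g (s a) e (s' a) != 0 by apply: contraNneq hne => ->; rewrite mul0r.
  have hP : pathG W e (a + 1) L s s' != 0 by apply: contraNneq hne => ->; rewrite mulr0.
  have [h' [h'a h'Z h'al]] := IH _ _ hP.
  exists (upd h' (a - 1) g); split.
  - by rewrite /upd eqxx.
  - move=> i hi; rewrite /upd; case: eqP => [?|_]; first by subst; lia.
    by apply: h'Z; lia.
  - move=> i; rewrite in_cons => /orP[/eqP ->|hi].
      rewrite /upd eqxx; case: eqP => [?|_]; first by lia.
      by move: h'a; rewrite addrK => ->; apply: Omega_neq0 hW.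
    have := h'al i hi; rewrite /upd; move: hi; rewrite mem_ir => hi.
    by case: eqP => [?|_]; [lia|case: eqP => [?|_]; [lia|]].
case: (eqVneq (W g (s a) false (s' a) * pathG W false (a + 1) L s s') 0) => h0.
  by rewrite h0 add0r => /key.
by move=> _; apply: key h0.
Qed.

Lemma rowsum_pathG a L s s' : vac a L s -> vac a L s' ->
  rowsum 1 w2 1 w4 w5 w6 s s' = pathG W false a L s s'.
Proof.
move=> vs vs'; rewrite /rowsum.
have Fc : forall h, rowconf s s' h ->
   \big[*%R/1%R]_(i \in [set: int]) W (h (i - 1)) (s i) (h i) (s' i) = pathG W false a L s s'.
  move=> h hr; have hZ := rowconf_Z vs vs' hr.
  rewrite (prod_window vs vs' hZ) prod_path.
  - by rewrite (negbTE (hZ _ _)) //; left; lia.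
  - by move=> i _; apply: hr.2.
  - by apply/negbTE/hZ; right; lia.
case: (eqVneq (pathG W false a L s s') 0) => hc.
  by rewrite fsbig1 // => h hr; rewrite Fc.
have [h0 [h0a h0Z h0al]] := path_exists hc.
have hZ0 : forall i, (i < a \/ a + L%:Z - 1 <= i) -> ~~ h0 i.
  move=> i [hi|hi]; last by apply: h0Z; right.
  case: (eqVneq i (a - 1)) => [->|ne]; first by rewrite h0a.
  by apply: h0Z; left; lia.
have hr0 : rowconf s s' h0.
  split.
    exists (`|a| + L%:Z + 2) => i hi; apply: hZ0; lia.
  move=> i; case: (boolP (i \in ir a L)) => hi; first exact: h0al.
  move: hi; rewrite mem_ir negb_and -!ltNge => /orP[] hi.
    rewrite (negbTE (hZ0 i _)) ?(negbTE (hZ0 (i-1) _)) ?(proj1 (vs i)) ?(proj1 (vs' i)) //; lia.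
  rewrite (negbTE (hZ0 i _)) ?(negbTE (hZ0 (i-1) _)); try lia.
  by rewrite (negbTE (proj2 (vs i) _)) ?(negbTE (proj2 (vs' i) _)) //; lia.
rewrite (@fsbig_seqE _ _ _ _ _ _ [:: h0]) //.
- by rewrite big_seq1 Fc.
- by move=> h hr _; rewrite (rowconf_uniq vs vs' hr hr0) mem_seq1.
- by move=> x; rewrite mem_seq1 => /eqP ->.
Qed.
End RowSum.


Lemma rowconf_vac a L t s' h : vac a L s' -> rowconf t s' h -> vac a L t.
Proof.
move=> vs' [[N hN] hal] i; split => hi.
  apply: contraT => ti.
  have hi1 : h (i - 1).
    by have := hal i; rewrite (negbTE ti) (proj1 (vs' i) hi); case: (h (i-1)); case: (h i).
  have hs : forall j, j <= i - 1 -> h j -> h (j - 1).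
    move=> j jc hj; have := hal j; rewrite hj (proj1 (vs' j)); last by lia.
    by case: (h (j-1)); case: (t j).
  by have := noinf_left hN hs (lexx (i-1)); rewrite hi1.
apply/negP => ti.
have hi1 : h i.
  by have := hal i; rewrite ti (negbTE (proj2 (vs' i) hi)); case: (h (i-1)); case: (h i).
have hs : forall j, i <= j -> h j -> h (j + 1).
  move=> j jc hj; have := hal (j + 1); rewrite addrK hj (negbTE (proj2 (vs' (j + 1)) _)); last by lia.
  by case: (h (j+1)); case: (t (j+1)).
by have := noinf_right hN hs (lexx i); rewrite hi1.
Qed.

Lemma rowsum_out (R : comNzRingType) (w1 w2 w3 w4 w5 w6 : R) a L t s' :
  vac a L s' -> ~ vac a L t -> rowsum w1 w2 w3 w4 w5 w6 t s' = 0.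
Proof.
move=> vs' nv; rewrite /rowsum fsbig1 // => h hr.
by exfalso; apply: nv; apply: rowconf_vac hr.
Qed.

Lemma maya_vac s s' : maya s -> maya s' -> exists a L, vac a L s /\ vac a L s'.
Proof.
move=> [[N1 h1] [M1 k1]] [[N2 h2] [M2 k2]].
exists (Num.min N1 N2), (absz (Num.max M1 M2 - Num.min N1 N2)).
split => i; split => hi.
- by apply: h1; lia.
- by apply: k1; lia.
- by apply: h2; lia.
- by apply: k2; lia.
Qed.

Lemma vac_maya a L s : vac a L s -> maya s.
Proof.
move=> v; split.
  by exists (a - 1) => i hi; apply: (proj1 (v i)); lia.
by exists (a + L%:Z) => i hi; apply: (proj2 (v i)).
Qed.

Lemma ext_at a l (k : nat) : ext a l (a + k%:Z) = nth false l k.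
Proof.
rewrite /ext; have -> : (a + k%:Z < a) = false by lia.
by congr nth; lia.
Qed.

Lemma ext_vac a l : vac a (size l) (ext a l).
Proof.
move=> i; split => hi; rewrite /ext; first by rewrite hi.
have -> : (i < a) = false by lia.
by rewrite nth_default //; lia.
Qed.

Lemma nth_ir a L k : (k < L)%N -> nth 0 (ir a L) k = a + k%:Z.
Proof.
elim: L a k => [|L IH] a [|k] //= hk; first by rewrite addr0.
by rewrite IH //; lia.
Qed.

Definition win a L (s : state) := map s (ir a L).

Lemma size_win a L s : size (win a L s) = L.
Proof. by rewrite size_map size_ir. Qed.

Lemma ext_win a L s : vac a L s -> ext a (win a L s) = s.
Proof.
move=> v; apply/funext => i; rewrite /ext.
case: ifP => hi; first by rewrite (proj1 (v i)).
case: (ltnP (absz (i - a)) L) => hk.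
  rewrite (nth_map 0) ?size_ir // nth_ir //; congr s; lia.
by rewrite nth_default ?size_win //; apply/esym/negbTE/(proj2 (v i)); lia.
Qed.

Lemma win_ext a l : win a (size l) (ext a l) = l.
Proof.
apply: (@eq_from_nth _ false); rewrite size_win // => k hk.
by rewrite (nth_map 0) ?size_ir // nth_ir // ext_at.
Qed.

Fixpoint bl (L : nat) : seq (seq bool) :=
  if L is L'.+1 then [seq false :: l | l <- bl L'] ++ [seq true :: l | l <- bl L']
  else [:: [::]].

Lemma mem_bl L l : (l \in bl L) = (size l == L).
Proof.
have inj (b : bool) : injective (cons b) by move=> x y [].
elim: L l => [|L IH] [|b l] //=; rewrite mem_cat.
- by apply/negbTE; rewrite negb_or; apply/andP; split; apply/mapP => -[].
rewrite eqSS -IH; case: b.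
  rewrite (mem_map (inj true)); have -> // : (true :: l \in [seq false :: l0 | l0 <- bl L]) = false.
  by apply/negbTE/mapP => -[].
rewrite (mem_map (inj false)); have -> : (false :: l \in [seq true :: l0 | l0 <- bl L]) = false.
  by apply/negbTE/mapP => -[].
by rewrite orbF.
Qed.

Lemma uniq_bl L : uniq (bl L).
Proof.
elim: L => [|L IH] //=; rewrite cat_uniq !map_inj_uniq; try by move=> x y [].
rewrite IH andbT /=; apply/hasPn => l /mapP[x _ ->]; apply/mapP => -[y _] //.
Qed.


Definition flat (p : seq (int * int)) : seq int := flatten [seq [:: ij.1; ij.2] | ij <- p].
Definition valid (p : seq (int * int)) (s : state) := all (fun ij => s ij.1 && ~~ s ij.2) p.
Definition mv (p : seq (int * int)) (s : state) : state :=
  fun k => if k \in flat p then ~~ s k else s k.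

Lemma flat_cons i j q : flat ((i, j) :: q) = i :: j :: flat q.
Proof. by []. Qed.

Lemma interlacedE p : interlaced p = sorted <%R (flat p).
Proof.
elim: p => [|[i j] q IH] //=.
rewrite IH; case: q {IH} => [|[i' j'] q] /=; [by rewrite !andbT | by rewrite -!andbA].
Qed.

Lemma sum_abs_ge (r : seq int) x : x \in r -> `|x| <= \sum_(y <- r) `|y|.
Proof.
elim: r => [|y r IH] //=; rewrite in_cons big_cons => /orP[/eqP ->|/IH h].
  by rewrite lerDl sumr_ge0.
by rewrite (le_trans h) // lerDr.
Qed.

Lemma maya_flip (r : seq int) (s s2 : state) : maya s ->
  (forall k, k \notin r -> s2 k = s k) -> maya s2.
Proof.
move=> [[N hN] [M hM]] e; set B := \sum_(y <- r) `|y|.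
have nr k : B < `|k| -> k \notin r.
  by apply: contraTN => /sum_abs_ge; rewrite -leNgt.
split.
  exists (Num.min N (- B - 1)) => i hi; rewrite e ?hN //; [lia|apply: nr; lia].
exists (Num.max M (B + 1)) => i hi; rewrite e ?hM //; [lia|apply: nr; lia].
Qed.

Lemma maya_mv p s : maya s -> maya (mv p s).
Proof. by move=> ms; apply: (@maya_flip (flat p) s) => // k /negbTE; rewrite /mv => ->. Qed.

Lemma maya_upd s i b : maya s -> maya (upd s i b).
Proof.
move=> ms; apply: (@maya_flip [:: i] s) => // k.
by rewrite mem_seq1 /upd => /negbTE ->.
Qed.

Lemma fsbig_single (R : eqType) (idx : R) (op : Monoid.com_law idx)
  (T : choiceType) (P : set T) (F : T -> R) x0 :
  P x0 -> (forall x, P x -> x <> x0 -> F x = idx) ->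
  \big[op/idx]_(x \in P) F x = F x0.
Proof.
move=> Px0 h; rewrite (@fsbig_seqE _ _ _ _ _ _ [:: x0]) ?big_seq1 //.
- move=> x Px Fx; rewrite mem_seq1; apply/eqP; apply: contra_notP Fx; exact: h.
- by move=> x; rewrite mem_seq1 => /eqP ->.
Qed.

Section Eop.
Variables (K : fieldType) (t : K).
Hypothesis t0 : t != 0.

Definition eopw (i j : int) (s : state) : K :=
  (1 - t) * (- t)^-1 * \prod_(k <- ir (i + 1)%R (absz (j - (i + 1))%R)) ((- t) ^+ s k)^-1.

Lemma mt_neq0 (b : bool) : (- t) ^+ b != 0.
Proof. by rewrite expf_neq0 // oppr_eq0. Qed.

Lemma Eop_formula i j s' tau : maya tau -> i < j ->
  Eop t i j s' tau =
  if tau i && ~~ tau j && (s' == upd (upd tau j true) i false) then eopw i j tau else 0.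
Proof.
move=> mt ij; rewrite /Eop /opscale /opmul.
set r0 := upd tau j true.
rewrite (@fsbig_single _ _ _ _ _ _ r0); last first.
- move=> x _ ne; rewrite /psi_plus; case: ifP; last by rewrite mulr0.
  by case/andP => _ /eqP.
- exact: maya_upd.
have [M hM] := mt.2.
set n := absz (M - (j + 1))%R.
set m := absz (j - (i + 1))%R.
have Pj : forall P : set int, (forall k, P k <-> j < k) -> \big[*%R/1%R]_(k \in P) ((- t) ^+ tau k) =
          \prod_(k <- ir (j + 1)%R n) ((- t) ^+ tau k).
  move=> P HP; apply: fsbig_seqE; first exact: uniq_ir.
    move=> k /HP jk; case: (boolP (tau k)) => tk; last by rewrite expr0.
    move=> _; rewrite mem_ir; apply/andP; split; first lia.
    by apply: contraTT tk => hk; apply: hM; lia.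
  by move=> k; rewrite mem_ir /= => hk; case; apply/HP; lia.
have Qi : forall P : set int, (forall k, P k <-> i < k) -> \big[*%R/1%R]_(k \in P) ((- t) ^- r0 k) =
    \prod_(k <- ir (i + 1)%R m) ((- t) ^+ tau k)^-1 * (- t)^-1 *
    \prod_(k <- ir (j + 1)%R n) ((- t) ^+ tau k)^-1.
  move=> P HP; rewrite (@fsbig_seqE _ _ _ _ _ _ (ir (i + 1) (m + n.+1))); first last.
  - by move=> k; rewrite mem_ir /= => hk; case; apply/HP; lia.
  - move=> k /HP ik; rewrite /r0 /upd; case: eqP => [->|kj].
      by move=> _; rewrite mem_ir; lia.
    case: (boolP (tau k)) => tk; last by rewrite expr0 invr1.
    move=> _; rewrite mem_ir; apply/andP; split; first lia.
    by apply: contraTT tk => hk; apply: hM; lia.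
  - exact: uniq_ir.
  rewrite ir_cat.
  have -> : i + 1 + m%:Z = j by lia.
  rewrite big_cat /= big_cons mulrA.
  congr (_ * _ * _).
  - apply: eq_big_seq => k; rewrite mem_ir => hk; rewrite /r0 /upd.
    by case: eqP => // ?; lia.
  - by rewrite /r0 /upd eqxx expr1.
  - apply: eq_big_seq => k; rewrite mem_ir => hk; rewrite /r0 /upd.
    by case: eqP => // ?; lia.
rewrite /psi_minus /psi_plus eqxx andbT.
have -> : r0 i = tau i by rewrite /r0 /upd; case: eqP => // ?; lia.
case: (tau i) => /=; last by rewrite !mul0r mulr0.
case: (s' == upd r0 i false) => /=; last by rewrite mul0r mulr0 andbF.
rewrite andbT; case: (boolP (tau j)) => tj /=; first by rewrite !mulr0.
rewrite Pj; last by move=> k.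
rewrite (Qi [set j0 | i < j0]); last by move=> k.
rewrite /eopw.
set A := \prod_(k <- ir (i + 1)%R m) _.
set B := \prod_(k <- ir (j + 1)%R n) _.
set C := \prod_(k <- ir (j + 1)%R n) _.
have BC : B * C = 1.
  rewrite /B /C -big_split /= big1_seq // => k _; rewrite mulVf //; exact: mt_neq0.
transitivity ((1 - t) * (-t)^-1 * A * (B * C)); first by ring.
by rewrite BC mulr1.
Qed.

Definition wtE (p : seq (int * int)) (s : state) : K := \prod_(ij <- p) eopw ij.1 ij.2 s.

Lemma mv_out p s k : k \notin flat p -> mv p s k = s k.
Proof. by rewrite /mv => /negbTE ->. Qed.

Lemma sorted_head i j q : sorted <%R (flat ((i, j) :: q)) ->
  [/\ i < j, forall x, x \in flat q -> j < x & sorted <%R (flat q)].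
Proof.
rewrite flat_cons /= => /andP[ij]; rewrite (path_sortedE lt_trans) => /andP[/allP h ->].
by split.
Qed.

Lemma Eprod_formula p s s' : maya s -> interlaced p ->
  Eprod t p s' s = if valid p s && (s' == mv p s) then wtE p s else 0.
Proof.
elim: p s' => [|[i j] q IH] s' ms.
  have -> : mv [::] s = s by apply/funext => k; rewrite /mv in_nil.
  by rewrite /= /op1 /wtE big_nil.
rewrite interlacedE => hs; have [ij jq sq] := sorted_head hs.
have iq : interlaced q by rewrite interlacedE.
have mq := maya_mv q ms.
rewrite /= /opmul (@fsbig_single _ _ _ _ _ _ (mv q s)) //; last first.
  move=> x _ ne; rewrite IH //; case: eqP; last by rewrite andbF mulr0.
  by move=> e; exfalso; apply: ne.
rewrite IH // eqxx andbT Eop_formula //.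
have oq k : k <= j -> k \notin flat q.
  by move=> kj; apply/negP => /jq; rewrite ltNge kj.
rewrite !mv_out ?oq //; last by rewrite ltW.
have -> : eopw i j (mv q s) = eopw i j s.
  rewrite /eopw; congr (_ * _); apply: eq_big_seq => k; rewrite mem_ir => hk.
  by rewrite mv_out // oq //; lia.
rewrite /valid /= -/(valid q s) /wtE big_cons /= -/(wtE q s).
case si: (s i) => /=; last by rewrite mul0r.
case sj: (s j) => /=; first by rewrite mul0r.
have -> : upd (upd (mv q s) j true) i false = mv ((i, j) :: q) s.
  apply/funext => k; rewrite /upd /mv flat_cons !in_cons.
  case: eqP => [->|ki]; first by rewrite si.
  case: eqP => [->|kj]; first by rewrite sj orbT.
  by [].
case: (valid q s); rewrite ?andbF ?andbT; last by rewrite mulr0.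
by case: (s' == _); rewrite ?mul0r.
Qed.
End Eop.


Section PathA.
Variables (K : fieldType) (t : K).
Hypothesis t0 : t != 0.

Definition WA := Omega (1 : {poly K}) (- 'X) 1 (t%:P * 'X) 1 (- ((1 - t)%:P * 'X)).

Definition opw (a j : int) (s : state) : {poly K} :=
  \prod_(k <- ir a (absz (j - a))%R) (if s k then - 'X else t%:P * 'X).
Definition segw (i j : int) (s : state) : {poly K} := - ((1 - t)%:P * 'X) * opw (i + 1) j s.
Definition WtP (p : seq (int * int)) (s : state) : {poly K} :=
  \prod_(ij <- p) segw ij.1 ij.2 s.

Definition closedP (a : int) (L : nat) (s s' : state) p :=
  [/\ sorted <%R (flat p), all (fun x => (a <= x) && (x < a + L%:Z)) (flat p),
      valid p s & forall i, i \in ir a L -> s' i = mv p s i].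

Definition openP (a : int) (L : nat) (s s' : state) (j : int) (p : seq (int * int)) :=
  [/\ (a <= j) && (j < a + L%:Z), sorted <%R (flat p),
      (forall x, x \in flat p -> (j < x) && (x < a + L%:Z)),
      (s j == false) && (s' j == true) &
      [/\ (forall i, (a <= i) && (i < j) -> s' i = s i), valid p s &
          forall i, (j < i) && (i < a + L%:Z) -> s' i = mv p s i]].

Lemma opw0 a s : opw a a s = 1.
Proof. by rewrite /opw subrr big_nil. Qed.

Lemma opwS a j s : a < j -> opw a j s = (if s a then - 'X else t%:P * 'X) * opw (a + 1) j s.
Proof.
move=> aj; rewrite /opw.
have -> : absz (j - a)%R = (absz (j - (a + 1))%R).+1 by lia.
by rewrite /= big_cons.
Qed.

Lemma path_val L : forall a s s',
  (forall p, closedP a L s s' p -> pathG WA false a L s s' = WtP p s) /\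
  (forall j p, openP a L s s' j p -> pathG WA true a L s s' = opw a j s * WtP p s).
Proof.
elim: L => [|L IH] a s s'.
  split.
    move=> [|[i j] p] [_ hb _ _] //=; first by rewrite /WtP big_nil.
    by move: hb; rewrite flat_cons /= => /andP[]; lia.
  by move=> j p [hj]; lia.
have [IH1 IH2] := IH (a + 1) s s'.
split.
- move=> p [sp bp vp mp] /=.
  case: p sp bp vp mp => [|[i j] p'] sp bp vp mp.
    rewrite mp ?mem_head // /mv in_nil.
    by case: (s a) => /=; rewrite mul0r addr0 mul1r (IH1 [::]) //; split => // k hk;
       apply: mp; rewrite in_cons hk orbT.
  move: bp; rewrite flat_cons /= => /and3P[/andP[ai ai2] /andP[aj aj2] bp'].
  have [ij jp' sp'] := sorted_head sp.
  case: (eqVneq i a) => [eia|nia].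
    subst i; move: vp; rewrite /valid /= => /andP[/andP[sa sj] vp'].
    have s'a : s' a = false by rewrite mp ?mem_head // /mv flat_cons mem_head sa.
    rewrite sa s'a /= mul0r add0r.
    rewrite (IH2 j p'); first by rewrite /WtP big_cons /segw /= !mulrA.
    split => //.
    + by apply/andP; split; lia.
    + move=> x /[dup] xp /jp' jx; apply/andP; split => //.
      by move/allP: bp' => /(_ x xp); lia.
    + rewrite (negbTE sj) eqxx /= mp; first by rewrite /mv flat_cons !in_cons eqxx orbT sj.
      by rewrite mem_ir; lia.
    + split => //.
      * move=> k hk; rewrite mp; last by rewrite mem_ir; lia.
        rewrite mv_out // flat_cons !in_cons negb_or; apply/andP; split; first lia.
        rewrite negb_or; apply/andP; split; first lia.
        by apply/negP => /jp'; lia.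
      * move=> k hk; rewrite mp; last by rewrite mem_ir; lia.
        rewrite /mv flat_cons !in_cons.
        rewrite /mv.
        have -> : (k == a) = false by lia.
        by have -> : (k == j) = false by lia.
  have ai1 : a < i by rewrite lt_neqAle eq_sym nia.
  have ao : a \notin flat ((i, j) :: p').
    rewrite flat_cons !in_cons negb_or; apply/andP; split; first lia.
    rewrite negb_or; apply/andP; split; first lia.
    by apply/negP => /jp'; lia.
  rewrite mp ?mem_head // mv_out //.
  case: (s a) => /=; rewrite mul0r addr0 mul1r (IH1 ((i, j) :: p')) //; split => //.
  + rewrite flat_cons /= (_ : (a + 1 <= i) && (i < a + 1 + L%:Z) = true); last lia.
    rewrite (_ : (a + 1 <= j) && (j < a + 1 + L%:Z) = true); last lia.
    by apply/allP => x xp; move/allP: bp' => /(_ x xp) => h; have := jp' x xp; lia.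
  + by move=> k hk; apply: mp; rewrite in_cons hk orbT.
  + rewrite flat_cons /= (_ : (a + 1 <= i) && (i < a + 1 + L%:Z) = true); last lia.
    rewrite (_ : (a + 1 <= j) && (j < a + 1 + L%:Z) = true); last lia.
    by apply/allP => x xp; move/allP: bp' => /(_ x xp) => h; have := jp' x xp; lia.
  + by move=> k hk; apply: mp; rewrite in_cons hk orbT.
- move=> j p [hj sp bp /andP[/eqP sj /eqP s'j] [hl vp hr]] /=.
  case: (eqVneq j a) => [eja|nja].
    subst j; rewrite sj s'j /= mul0r addr0 mul1r opw0 mul1r (IH1 p) //.
    split => //.
      by apply/allP => x /bp; lia.
    by move=> k; rewrite mem_ir => hk; apply: hr; lia.
  have aj : a < j by case/andP: hj => h _; rewrite lt_neqAle eq_sym nja.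
  rewrite hl; last by lia.
  rewrite (opwS _ aj) -mulrA -(IH2 j p).
    by case: (s a) => /=; rewrite mul0r add0r.
  split => //.
  + by apply/andP; split; lia.
  + by move=> x /bp; lia.
  + by rewrite sj s'j.
  + split => //.
    * by move=> k hk; apply: hl; lia.
    * by move=> k hk; apply: hr; lia.
Qed.

Lemma path_ex L : forall a s s',
  (pathG WA false a L s s' != 0 -> exists p, closedP a L s s' p) /\
  (pathG WA true a L s s' != 0 -> exists j p, openP a L s s' j p).
Proof.
elim: L => [|L IH] a s s'.
  split => /=; first by move=> _; exists [::]; split.
  by rewrite eqxx.
have [IH1 IH2] := IH (a + 1) s s'.
split => /=.
- case sa: (s a); case s'a: (s' a); rewrite /= ?mul0r ?mul1r ?add0r ?addr0.
  + move/IH1 => [p [sp bp vp mp]]; exists p; split => //.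
      by apply/allP => x /(allP bp); lia.
    move=> i; rewrite in_cons => /orP[/eqP ->|hi]; last exact: mp.
    rewrite mv_out ?s'a ?sa //; apply/negP => /(allP bp); lia.
  + move=> h; have : pathG WA true (a + 1) L s s' != 0.
      by apply: contraNneq h => ->; rewrite mulr0.
    move/IH2 => [j [p [hj sp bp /andP[/eqP sj /eqP s'j] [hl vp hr]]]].
    exists ((a, j) :: p); split.
    * rewrite flat_cons /= (path_sortedE lt_trans) sp andbT.
      apply/andP; split; first lia.
      by apply/allP => x /bp; lia.
    * rewrite flat_cons /=; apply/andP; split; first lia.
      apply/andP; split; first lia.
      by apply/allP => x /bp; lia.
    * by rewrite /valid /= sa sj.
    * move=> i; rewrite mem_ir => hi; rewrite /mv flat_cons !in_cons.
      case: eqP => [->|nia]; first by rewrite sa s'a.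
      case: eqP => [->|nij]; first by rewrite sj s'j.
      case: (ltgtP i j) => [ij|ji|ij]; last by exfalso; apply: nij.
        rewrite hl; last lia.
        by rewrite ifF //; apply/negP => /bp; lia.
      by rewrite hr //; lia.
  + by rewrite eqxx.
  + move/IH1 => [p [sp bp vp mp]]; exists p; split => //.
      by apply/allP => x /(allP bp); lia.
    move=> i; rewrite in_cons => /orP[/eqP ->|hi]; last exact: mp.
    rewrite mv_out ?s'a ?sa //; apply/negP => /(allP bp); lia.
- case sa: (s a); case s'a: (s' a); rewrite /= ?mul0r ?mul1r ?add0r ?addr0.
  + move=> h; have : pathG WA true (a + 1) L s s' != 0.
      by apply: contraNneq h => ->; rewrite mulr0.
    move/IH2 => [j [p [hj sp bp sjj [hl vp hr]]]].
    exists j, p; split => //.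
    * by apply/andP; split; lia.
    * by move=> x /bp; lia.
    * split => // i hi; last by apply: hr; lia.
      case: (eqVneq i a) => [->|nia]; first by rewrite sa s'a.
      by apply: hl; lia.
  + by rewrite eqxx.
  + move/IH1 => [p [sp bp vp mp]]; exists a, p; split => //.
    * by apply/andP; split; lia.
    * by move=> x xp; have := allP bp x xp; lia.
    * by rewrite sa s'a.
    * split => // i hi; first lia.
      by apply: mp; rewrite mem_ir; lia.
  + move=> h; have : pathG WA true (a + 1) L s s' != 0.
      by apply: contraNneq h => ->; rewrite mulr0.
    move/IH2 => [j [p [hj sp bp sjj [hl vp hr]]]].
    exists j, p; split => //.
    * by apply/andP; split; lia.
    * by move=> x /bp; lia.
    * split => // i hi; last by apply: hr; lia.
      case: (eqVneq i a) => [->|nia]; first by rewrite sa s'a.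
      by apply: hl; lia.
Qed.
End PathA.


Lemma flat_inj p q : flat p = flat q -> p = q.
Proof.
elim: p q => [|[i j] p IH] [|[k l] q] //=.
by case=> -> -> /IH ->.
Qed.

Lemma mem_flat_mv p s k : (k \in flat p) = (mv p s k != s k).
Proof. by rewrite /mv; case: ifP => _; [case: (s k) | rewrite eqxx]. Qed.

Lemma p_uniq p q s : sorted <%R (flat p) -> sorted <%R (flat q) -> mv p s = mv q s -> p = q.
Proof.
move=> sp sq e; apply: flat_inj.
apply: (irr_sorted_eq lt_trans ltxx) => // k.
by rewrite !(mem_flat_mv _ s) e.
Qed.

Lemma sorted_lt p : sorted <%R (flat p) -> all (fun ij => ij.1 < ij.2) p.
Proof.
elim: p => [|[i j] p IH] // sp; have [ij _ sp'] := sorted_head sp.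
by rewrite /= ij IH.
Qed.

Lemma prod_X (K : nzRingType) (r : seq int) : \prod_(k <- r) ('X : {poly K}) = 'X ^+ size r.
Proof. by elim: r => [|x r IH]; rewrite ?big_nil ?expr0 // big_cons IH exprS. Qed.

Section Coef.
Variables (K : fieldType) (t : K).
Hypothesis t0 : t != 0.

Definition segc (i j : int) (s : state) : K :=
  - (1 - t) * \prod_(k <- ir (i + 1)%R (absz (j - (i + 1))%R)) (if s k then -1 else t).

Lemma segw_E i j s : i < j ->
  segw t i j s = (segc i j s)%:P * 'X ^+ (absz (j - i))%R.
Proof.
move=> ij; rewrite /segw /opw /segc.
rewrite (eq_bigr (fun k => (if s k then -1 else t)%:P * 'X)); last first.
  by move=> k _; case: (s k); rewrite ?polyCN ?mulN1r ?mul1r.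
rewrite big_split /= prod_X size_ir -(rmorph_prod polyC) polyCM polyCN.
have -> : absz (j - i)%R = (absz (j - (i + 1))%R).+1 by lia.
rewrite exprS.
set A := (\prod_(_ <- _) _)%:P; set B := 'X^_; set C := (1 - t)%:P.
rewrite !mulNr -!mulrA; congr (- (C * _)); by rewrite mulrCA.
Qed.

Lemma WtP_E p s : all (fun ij => ij.1 < ij.2) p ->
  WtP t p s = (\prod_(ij <- p) segc ij.1 ij.2 s)%:P *
              'X ^+ (\sum_(ij <- p) absz (ij.2 - ij.1)%R).
Proof.
elim: p => [|[i j] p IH] /=; first by rewrite /WtP !big_nil mul1r.
move=> /andP[ij hp]; rewrite /WtP !big_cons -/(WtP t p s) IH // segw_E //.
have H (a b : K) (U V : {poly K}) : a%:P * U * (b%:P * V) = (a * b)%:P * (U * V).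
  by rewrite polyCM -!mulrA; congr (_ * _); rewrite mulrCA.
by rewrite exprD H.
Qed.

Lemma pweight_E p : all (fun ij => ij.1 < ij.2) p ->
  pweight p = (\sum_(ij <- p) absz (ij.2 - ij.1)%R)%:Z.
Proof.
elim: p => [|[i j] p IH] /=; first by rewrite /pweight !big_nil.
move=> /andP[ij hp]; rewrite /pweight !big_cons -/(pweight p) IH //=.
rewrite PoszD; congr (_ + _); lia.
Qed.

Lemma prod_cst (R : comNzRingType) (r : seq int) (c : R) : \prod_(k <- r) c = c ^+ size r.
Proof. by elim: r => [|x r IH]; rewrite ?big_nil ?expr0 // big_cons IH exprS. Qed.

Lemma tdivmt : t * (- t)^-1 = -1.
Proof. by rewrite invrN mulrN divff. Qed.

Lemma tk_eopw i j s : i < j -> t ^+ (absz (j - i))%R * eopw t i j s = segc i j s.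
Proof.
move=> ij; rewrite /eopw /segc.
have -> : absz (j - i)%R = (absz (j - (i + 1))%R).+1 by lia.
set r := ir (i + 1)%R (absz (j - (i + 1))%R).
have e : t ^+ absz (j - (i + 1))%R = \prod_(k <- r) t by rewrite prod_cst size_ir.
rewrite exprS e.
have -> : \prod_(k <- r) (if s k then -1 else t) = \prod_(k <- r) (t * ((- t) ^+ s k)^-1).
  by apply: eq_bigr => k _; case: (s k); rewrite ?expr1 ?tdivmt ?expr0 ?invr1 ?mulr1.
rewrite big_split /=.
transitivity ((1 - t) * (t * (- t)^-1) * (\prod_(k <- r) t * \prod_(k <- r) ((- t) ^+ s k)^-1)).
  by ring.
by rewrite tdivmt mulrN1 mulNr.
Qed.

Lemma tk_wtE p s : all (fun ij => ij.1 < ij.2) p ->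
  t ^+ (\sum_(ij <- p) absz (ij.2 - ij.1)%R) * wtE t p s = \prod_(ij <- p) segc ij.1 ij.2 s.
Proof.
elim: p => [|[i j] p IH]; first by rewrite /wtE !big_nil mulr1.
move=> /andP [ij hp].
rewrite /wtE !big_cons -/(wtE t p s) exprD -IH // -(tk_eopw s ij) /=.
by ring.
Qed.
End Coef.


Lemma mv_nil s : mv [::] s = s.
Proof. by apply/funext => k; rewrite /mv in_nil. Qed.

Lemma closed_global a L s s' p : vac a L s -> vac a L s' -> closedP a L s s' p -> s' = mv p s.
Proof.
move=> vs vs' [sp bp vp mp]; apply/funext => i.
case: (boolP (i \in ir a L)) => hi; first exact: mp.
rewrite mv_out; last by apply/negP => /(allP bp); rewrite -mem_ir (negbTE hi).
move: hi; rewrite mem_ir negb_and -!ltNge => /orP[] hi.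
  by rewrite (proj1 (vs i) hi) (proj1 (vs' i) hi).
by rewrite (negbTE (proj2 (vs i) _)) ?(negbTE (proj2 (vs' i) _)) //; lia.
Qed.

Lemma global_closed a L s s' p : vac a L s -> vac a L s' -> sorted <%R (flat p) ->
  valid p s -> s' = mv p s -> closedP a L s s' p.
Proof.
move=> vs vs' sp vp e; split => //; last by move=> i _; rewrite e.
apply/allP => x xp; rewrite -mem_ir; apply: contraT => hx.
have : mv p s x != s x by rewrite -mem_flat_mv.
rewrite -e; move: hx; rewrite mem_ir negb_and -!ltNge => /orP[] hx.
  by rewrite (proj1 (vs x) hx) (proj1 (vs' x) hx).
by rewrite (negbTE (proj2 (vs x) _)) ?(negbTE (proj2 (vs' x) _)) //; lia.
Qed.

Lemma sum_pos p : all (fun ij => ij.1 < ij.2) p -> (0 < size p)%N ->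
  (0 < \sum_(ij <- p) absz (ij.2 - ij.1)%R)%N.
Proof.
case: p => [|[i j] p] //= /andP[ij _] _; rewrite big_cons /=; lia.
Qed.

Section AcoefPath.
Variables (K : fieldType) (t : K).
Hypothesis t0 : t != 0.

Lemma pathG_closed a L s s' p (k : nat) : closedP a L s s' p ->
  (pathG (WA t) false a L s s')`_k = (\prod_(ij <- p) segc t ij.1 ij.2 s) *
     (k == \sum_(ij <- p) absz (ij.2 - ij.1)%R)%:R.
Proof.
move=> cp; rewrite ((path_val t0 L a s s').1 p cp) (WtP_E t0) ?coefCM ?coefXn //.
by case: cp => sp _ _ _; apply: sorted_lt.
Qed.

Lemma Acoef_path s s' a L k : maya s -> vac a L s -> vac a L s' ->
  Acoef t k s' s = (pathG (WA t) false a L s s')`_k.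
Proof.
move=> ms vs vs'; rewrite /Acoef.
case: (pselect (exists p : seq (int * int),
   [/\ (0 < size p)%N, interlaced p & pweight p = k%:Z] /\ (valid p s /\ s' = mv p s))).
  move=> [p0 [[sz il pw] [vl e]]].
  have sp0 : sorted <%R (flat p0) by rewrite -interlacedE.
  have lt0 := sorted_lt sp0.
  rewrite (@fsbig_single _ _ _ _ _ _ p0) //; last first.
    move=> x [_ ilx _] ne; rewrite (Eprod_formula t0) //.
    case: ifP; last by rewrite mulr0.
    case/andP => vx /eqP ex; exfalso; apply: ne; apply: (@p_uniq _ _ s).
    - by rewrite -interlacedE.
    - by [].
    - by rewrite -ex -e.
  rewrite (Eprod_formula t0) // vl e eqxx /=.
  have kE : k = \sum_(ij <- p0) absz (ij.2 - ij.1)%R.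
    by apply/eqP; rewrite -eqz_nat -pw (pweight_E t0).
  have k0 : (k == 0)%N = false by rewrite kE; apply/negbTE; rewrite -lt0n sum_pos.
  rewrite k0 add0r (@pathG_closed _ _ _ _ p0); last first.
    by rewrite -e; apply: global_closed.
  by rewrite -kE eqxx mulr1 kE (tk_wtE t0).
move=> hn.
rewrite fsbig1; last first.
  move=> p [szp il pwp]; rewrite (Eprod_formula t0) //.
  case: ifP; last by rewrite mulr0.
  move=> /andP[vp /eqP ep]; exfalso; apply: hn; exists p; split; first by split.
  by split.
rewrite addr0.
case: (eqVneq (pathG (WA t) false a L s s') 0) => hz.
  rewrite hz coef0; case: eqP => // _; rewrite /op1; case: eqP => // ess'.
  have hc : closedP a L s s' [::].
    by apply: global_closed => //; rewrite mv_nil ess'.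
  have := (path_val t0 L a s s').1 [::] hc; rewrite hz /WtP big_nil => /eqP.
  by rewrite eq_sym oner_eq0.
have [p0 cp] := (path_ex t0 L a s s').1 hz.
have e := closed_global vs vs' cp.
rewrite (pathG_closed k cp).
case: p0 cp e => [|x p0] cp e.
  rewrite big_nil big_nil mul1r e mv_nil /op1 eqxx.
  by case: (k == 0%N).
have [sp _ _ _] := cp; have lt0 := sorted_lt sp.
have [km|km] := eqVneq k (\sum_(ij <- x :: p0) absz (ij.2 - ij.1)%R).
  exfalso; apply: hn; exists (x :: p0); split; last by split => //; case: cp.
  split => //; first by rewrite interlacedE.
  by rewrite (pweight_E t0) // km.
rewrite mulr0.
case: eqP => // _ ; rewrite /op1; case: eqP => // ess'.
have : mv (x :: p0) s = mv [::] s by rewrite mv_nil -e.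
by move/p_uniq => /(_ sp (erefl true)).
Qed.
End AcoefPath.


Lemma ext_head a b l : ext a (b :: l) a = b.
Proof. by rewrite /ext ltxx subrr. Qed.

Lemma ext_cons a b l i : a + 1 <= i -> ext a (b :: l) i = ext (a + 1) l i.
Proof.
move=> hi; rewrite /ext.
have -> : (i < a) = false by lia.
have -> : (i < a + 1) = false by lia.
have -> : absz (i - a)%R = (absz (i - (a + 1))%R).+1 by lia.
by [].
Qed.

Lemma expand4 (R : comNzRingType) (A0 A1 B0 B1 P0 P1 Q0 Q1 : R) :
  (A0 * P0 + A1 * P1) * (B0 * Q0 + B1 * Q1) =
  A0 * B0 * (P0 * Q0) + A0 * B1 * (P0 * Q1) + A1 * B0 * (P1 * Q0) + A1 * B1 * (P1 * Q1).
Proof. by ring. Qed.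

Section AT.
Variables (K : fieldType) (t : K).

Definition WT := Omega (1 : {poly K}) (- (t%:P * 'X)) 1 'X 1 ((1 - t)%:P * 'X).
Local Notation WA := (WA t).

Definition Cs g h a L s s' : {poly K} :=
  \sum_(l <- bl L) pathG WA g a L (ext a l) s' * pathG WT h a L s (ext a l).

Lemma pathG_cons (W : bool -> bool -> bool -> bool -> {poly K}) g a L b l s' :
  pathG W g a L.+1 (ext a (b :: l)) s' =
  W g b false (s' a) * pathG W false (a + 1) L (ext (a + 1) l) s' +
  W g b true (s' a) * pathG W true (a + 1) L (ext (a + 1) l) s'.
Proof.
rewrite /= ext_head !(@eq_pathG _ W _ (a + 1) L (ext a (b :: l)) s' (ext (a + 1) l) s') //;
by move=> i; rewrite mem_ir => /andP[hi _]; rewrite ext_cons.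
Qed.

Lemma pathG_cons' (W : bool -> bool -> bool -> bool -> {poly K}) g a L b l s :
  pathG W g a L.+1 s (ext a (b :: l)) =
  W g (s a) false b * pathG W false (a + 1) L s (ext (a + 1) l) +
  W g (s a) true b * pathG W true (a + 1) L s (ext (a + 1) l).
Proof.
rewrite /= ext_head !(@eq_pathG _ W _ (a + 1) L s (ext a (b :: l)) s (ext (a + 1) l)) //;
by move=> i; rewrite mem_ir => /andP[hi _]; rewrite ext_cons.
Qed.

Lemma Cs_rec g h a L s s' : Cs g h a L.+1 s s' =
  \sum_(b <- [:: false; true])
   (WA g b false (s' a) * WT h (s a) false b * Cs false false (a + 1) L s s' +
    WA g b false (s' a) * WT h (s a) true b * Cs false true (a + 1) L s s' +
    WA g b true (s' a) * WT h (s a) false b * Cs true false (a + 1) L s s' +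
    WA g b true (s' a) * WT h (s a) true b * Cs true true (a + 1) L s s').
Proof.
rewrite /Cs [bl L.+1]/= big_cat !big_map big_cons big_cons big_nil addr0.
congr (_ + _);
by under eq_bigr do rewrite pathG_cons pathG_cons' expand4;
   rewrite !big_split /= -!big_distrr.
Qed.

Lemma AT L : forall a s s',
  Cs false false a L s s' = (all (fun i => s i == s' i) (ir a L))%:R /\
  Cs false true a L s s' = Cs true false a L s s'.
Proof.
elim: L => [|L IH] a s s'.
  by rewrite /Cs /= !big_cons !big_nil /= !addr0 !mulr0 !mul0r mulr1.
have [I1 I2] := IH (a + 1) s s'.
rewrite !Cs_rec !big_cons !big_nil !addr0 /= I1 I2.
case: (s a); case: (s' a) => /=; split; rewrite ?mul0r ?mul1r ?addr0 ?add0r; try ring.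
Qed.
End AT.

Lemma pathG_coef0 (K : fieldType) (w2 w4 w5 w6 : {poly K}) : w6`_0 = 0 ->
  forall L a s s', (pathG (Omega 1 w2 1 w4 w5 w6) false a L s s')`_0 =
    (all (fun i => s i == s' i) (ir a L))%:R.
Proof.
move=> h6; elim=> [|L IH] a s s' /=; first by rewrite coefC.
case: (s a); case: (s' a) => /=; rewrite ?mul0r ?mul1r ?addr0 ?add0r ?IH //.
all: by rewrite ?coef0M ?h6 ?mul0r ?coef0.
Qed.

Lemma all_eq_map (T : eqType) (r : seq T) (f g : T -> bool) :
  all (fun i => f i == g i) r = (map f r == map g r).
Proof. by elim: r => [|x r IH] //=; rewrite eqseq_cons IH. Qed.


Section Main.
Variables (K : fieldType) (t : K).
Hypothesis t0 : t != 0.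

Lemma size_Ainv n : size (Ainv_upto t n) = n.+1.
Proof. by elim: n => [|n IH] //=; rewrite size_rcons IH. Qed.

Lemma Ainv_nth n j : (j <= n)%N -> nth (op1 K) (Ainv_upto t n) j = Ainvcoef t j.
Proof.
elim: n => [|n IH] hj; first by case: j hj.
case: (ltnP j n.+1) => hlt; first by rewrite /= nth_rcons size_Ainv hlt IH.
by have -> : j = n.+1 by apply/eqP; rewrite eqn_leq hj.
Qed.

Lemma Ainv_succ m s s' : Ainvcoef t m.+1 s' s =
  - \sum_(k < m.+1) opmul (Acoef t k.+1) (Ainvcoef t (m - k)) s' s.
Proof.
rewrite /Ainvcoef /= nth_rcons size_Ainv ltnn eqxx.
congr (- _); apply: eq_bigr => k _; rewrite Ainv_nth //; exact: leq_subr.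
Qed.

Lemma Acoef_rowsum s s' k : maya s -> maya s' ->
  Acoef t k s' s = (rowsum 1 (- 'X) 1 (t%:P * 'X) 1 (- ((1 - t)%:P * 'X)) s s')`_k.
Proof.
move=> ms ms'; have [a [L [vs vs']]] := maya_vac ms ms'.
by rewrite (Acoef_path t0 _ ms vs vs') (rowsum_pathG _ _ _ _ vs vs').
Qed.

Local Notation RT s s' := (rowsum 1 (- (t%:P * 'X)) 1 'X 1 ((1 - t)%:P * 'X) s s').
Local Notation RA s s' := (rowsum 1 (- 'X) 1 (t%:P * 'X) 1 (- ((1 - t)%:P * 'X)) s s').

Lemma main n : forall s s', maya s -> maya s' -> Ainvcoef t n s' s = (RT s s')`_n.
Proof.
elim/ltn_ind: n => n IH s s' hs hs'.
have [a [L [vs vs']]] := maya_vac hs hs'.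
rewrite (rowsum_pathG _ _ _ _ vs vs').
have WTE : Omega 1 (- (t%:P * 'X)) 1 'X 1 ((1 - t)%:P * 'X) = WT t by [].
case: n IH => [|m] IH.
  rewrite /Ainvcoef /= /op1 pathG_coef0; last by rewrite coefCM coefX mulr0.
  case: eqP => [->|ne]; first by rewrite (@all_eq_map _ _ s s) eqxx.
  rewrite all_eq_map; case: eqP => // ew; exfalso; apply: ne.
  by rewrite -(ext_win vs) -(ext_win vs'); congr ext.
set PA := fun l => pathG (WA t) false a L (ext a l) s'.
set PT := fun l => pathG (WT t) false a L s (ext a l).
have step : forall k : 'I_m.+1, opmul (Acoef t k.+1) (Ainvcoef t (m - k)) s' s =
    \sum_(l <- bl L) (PA l)`_k.+1 * (PT l)`_(m - k).
  move=> k; rewrite /opmul.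
  transitivity (\sum_(tau \in maya) (RA tau s')`_k.+1 * (RT s tau)`_(m - k)).
    apply: eq_fsbigr => tau; rewrite inE => htau.
    by rewrite Acoef_rowsum // IH // ltnS leq_subr.
  rewrite (@fsbig_seqE _ _ _ _ _ _ (map (ext a) (bl L))).
  - rewrite big_map; apply: eq_big_seq => l; rewrite mem_bl => /eqP hl.
    have vl : vac a L (ext a l) by rewrite -hl; apply: ext_vac.
    by rewrite (rowsum_pathG _ _ _ _ vl vs') (rowsum_pathG _ _ _ _ vs vl).
  - rewrite map_inj_in_uniq ?uniq_bl // => l1 l2; rewrite !mem_bl => /eqP h1 /eqP h2 e.
    by rewrite -(win_ext a l1) -(win_ext a l2) e h1 h2.
  - move=> tau mt ne; case: (pselect (vac a L tau)) => vt.
      apply/mapP; exists (win a L tau); first by rewrite mem_bl size_win.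
      by rewrite ext_win.
    by exfalso; apply: ne; rewrite (rowsum_out _ _ _ _ _ _ vs' vt) coef0 mul0r.
  - move=> x /mapP[l hl ->] nm; exfalso; apply: nm.
    exact: vac_maya (ext_vac a l).
rewrite Ainv_succ (eq_bigr _ (fun k _ => step k)) exchange_big /=.
have E : forall l, \sum_(k < m.+1) (PA l)`_k.+1 * (PT l)`_(m - k) =
    (PA l * PT l)`_m.+1 - (PA l)`_0 * (PT l)`_m.+1.
  move=> l; rewrite coefM [in RHS]big_ord_recl /= subn0 addrAC subrr add0r.
  by apply: eq_bigr => i _; rewrite /bump leq0n add1n subSS.
rewrite (eq_bigr _ (fun l _ => E l)) sumrB -coef_sum.
have -> : \sum_(l <- bl L) PA l * PT l = Cs t false false a L s s' by [].
rewrite (AT t L a s s').1 -mulr_natl mulr1 coefMn coef1 /= mul0rn sub0r opprK.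
set w0 := win a L s'.
have w0in : w0 \in bl L by rewrite mem_bl size_win.
rewrite (bigD1_seq w0) //=; last by rewrite uniq_bl.
rewrite big_seq_cond big1 ?addr0; last first.
  move=> l /andP[hl nl]; rewrite /PA pathG_coef0; last by rewrite coefN coefCM coefX mulr0 oppr0.
  rewrite all_eq_map -/(win a L (ext a l)) -/(win a L s').
  move: hl; rewrite mem_bl => /eqP hl; rewrite -{1}hl win_ext (negbTE nl) mul0r.
  by [].
rewrite /PA pathG_coef0; last by rewrite coefN coefCM coefX mulr0 oppr0.
rewrite all_eq_map -/(win a L (ext a w0)) -/(win a L s').
rewrite -{1}(size_win a L s') win_ext eqxx mul1r /PT ext_win //.
Qed.
End Main.

Theorem corollary4p10 (s s' : state) (hs : maya s) (hs' : maya s') (n : nat) :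
  Ainvcoef tC n s' s =
  (rowsum (1 : {poly Ct}) (- (tC%:P * 'X)) 1 'X 1 ((1 - tC)%:P * 'X) s s')`_n.
Proof.
have t0 : tC != 0 by rewrite /tC tofrac_eq0 polyX_eq0.
exact: (main t0 n hs hs').
Qed.
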